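(* Let $f\in C^2([0,\infty))$ satisfy $f(u)>0$ and $f'(u)>0$ for all $u>0$, assume $f$ is log-concave, i.e. $f''(u)f(u)-f'(u)^2<0$ for all $u>0$, and assume moreover that \[ uf'(u)>f(u)\quad\text{for all } u>0 . \] Let $u(r)$ be any positive solution of \[ u''+\frac{1}{r}u'+f(u)=0,\quad 0<r<1,\qquad u'(0)=u(1)=0 . \] Then $u$ is non-singular, i.e. the linearized problem \[ w''+\frac{1}{r}w'+f'(u(r))w=0,\quad 0<r<1,\qquad w'(0)=w(1)=0 \] has only the trivial solution $w\equiv 0$. *)

(* Defs.v *)
From Stdlib Require Import Reals.
From Coquelicot Require Import Coquelicot.
Open Scope R_scope.

(* A C^2 function on [0,oo) always extends to a C^2
   function on R, and only the values on [0,oo) matter. *)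
Definition C2_R (f : R -> R) : Prop :=
  (forall x, ex_derive f x) /\
  (forall x, ex_derive (Derive f) x) /\
  (forall x, continuous (Derive_n f 2) x).

Definition cont_on_01 (g : R -> R) : Prop :=
  forall r, 0 <= r <= 1 ->
    filterlim g (within (fun x => 0 <= x <= 1) (locally r)) (locally (g r)).

Definition rderiv0_zero (g : R -> R) : Prop :=
  filterlim (fun h => (g h - g 0) / h) (at_right 0) (locally 0).

Definition radial_solution (q : R -> R -> R) (g : R -> R) : Prop :=
  cont_on_01 g /\
  (forall r, 0 < r < 1 -> ex_derive g r /\ ex_derive (Derive g) r) /\
  (forall r, 0 < r < 1 ->
     Derive (Derive g) r + / r * Derive g r + q r (g r) = 0) /\
  rderiv0_zero g /\
  g 1 = 0.

(* Main.v *)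
Require Import Defs.
From Stdlib Require Import Reals.
From Coquelicot Require Import Coquelicot.
Open Scope R_scope.
From Stdlib Require Import Lra Classical.

Lemma ballR (x e y : R) : ball x e y <-> Rabs (y - x) < e.
Proof. split; intro H; exact H. Qed.

Lemma at_right_iff x (P : R -> Prop) :
  at_right x P <-> exists eta, 0 < eta /\ forall r, x < r < x + eta -> P r.
Proof.
  split.
  - intros [e He]. exists e. split; [apply cond_pos|].
    intros r Hr. apply He; [|lra]. apply ballR. rewrite Rabs_right; lra.
  - intros [e [He HP]]. exists (mkposreal e He). intros y Hy Hxy.
    apply ballR in Hy. change (Rabs (y - x) < e) in Hy. apply HP. split; [lra|].
    rewrite Rabs_right in Hy; lra.
Qed.

Lemma at_left_iff x (P : R -> Prop) :
  at_left x P <-> exists eta, 0 < eta /\ forall r, x - eta < r < x -> P r.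
Proof.
  split.
  - intros [e He]. exists e. split; [apply cond_pos|].
    intros r Hr. apply He; [|lra]. apply ballR. rewrite Rabs_left; lra.
  - intros [e [He HP]]. exists (mkposreal e He). intros y Hy Hxy.
    apply ballR in Hy. change (Rabs (y - x) < e) in Hy. apply HP. split; [|lra].
    rewrite Rabs_left in Hy; lra.
Qed.

Lemma mvt (g dg : R -> R) a b : a < b ->
  (forall c, a <= c <= b -> is_derive g c (dg c)) ->
  exists c, a < c < b /\ g b - g a = dg c * (b - a).
Proof.
  intros Hab Hd. destruct (MVT_cor2 g dg a b Hab) as [c [H1 H2]].
  - intros c Hc. apply is_derive_Reals. auto.
  - exists c. split; auto.
Qed.

Lemma le_eps a b : (forall eps, 0 < eps -> a <= b + eps) -> a <= b.
Proof.
  intros H. destruct (Rle_dec a b) as [h|h]; auto.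
  specialize (H ((a - b)/2)). lra.
Qed.

Lemma cont01_eps g : cont_on_01 g -> forall r, 0 <= r <= 1 -> forall eps, 0 < eps ->
  exists d, 0 < d /\ forall s, 0 <= s <= 1 -> Rabs (s - r) < d -> Rabs (g s - g r) < eps.
Proof.
  intros Hg r Hr eps He.
  specialize (Hg r Hr). apply filterlim_locally with (eps := mkposreal eps He) in Hg.
  destruct Hg as [d Hd]. exists d. split; [apply cond_pos|].
  intros s Hs Hsr. apply ballR. apply Hd; auto.
Qed.

Lemma deriv_cont_eps g x l : is_derive g x l -> forall eps, 0 < eps ->
  exists d, 0 < d /\ forall s, Rabs (s - x) < d -> Rabs (g s - g x) < eps.
Proof.
  intros Hd eps He.
  assert (Hc : continuous g x) by (apply ex_derive_continuous; exists l; exact Hd).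
  apply filterlim_locally with (eps := mkposreal eps He) in Hc.
  destruct Hc as [d Hd']. exists d. split; [apply cond_pos|].
  intros s Hs. apply ballR. apply Hd'. apply ballR. exact Hs.
Qed.

Definition Z (F : (R -> Prop) -> Prop) (g : R -> R) := forall eps, 0 < eps -> F (fun r => Rabs (g r) < eps).
Definition Bd (F : (R -> Prop) -> Prop) (g : R -> R) := exists M, F (fun r => Rabs (g r) <= M).

Section FL.
Context {F : (R -> Prop) -> Prop} {FF : Filter F}.

Lemma Z_Bd g : Z F g -> Bd F g.
Proof. intros H. exists 1. apply (@filter_imp _ F FF _ _ (fun r h => Rlt_le _ _ h)), H; lra. Qed.

Lemma Z_mult g h : Z F g -> Bd F h -> Z F (fun r => g r * h r).
Proof.
  intros Hg [M HM] eps He.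
  assert (HM1 : 0 < Rabs M + 1) by (pose proof (Rabs_pos M); lra).
  generalize (@filter_and _ F FF _ _ (Hg (eps / (Rabs M + 1)) ltac:(apply Rdiv_lt_0_compat; lra)) HM).
  apply filter_imp. intros r [h1 h2]. rewrite Rabs_mult.
  apply Rle_lt_trans with (Rabs (g r) * (Rabs M + 1)).
  - pose proof (Rle_abs M).
    apply Rmult_le_compat_l; [apply Rabs_pos|lra].
  - apply Rlt_le_trans with (eps / (Rabs M + 1) * (Rabs M + 1)).
    + apply Rmult_lt_compat_r; lra.
    + unfold Rdiv. rewrite Rmult_assoc, Rinv_l; lra.
Qed.

Lemma Z_mult' g h : Bd F h -> Z F g -> Z F (fun r => h r * g r).
Proof. intros H1 H2 eps He. generalize (Z_mult g h H2 H1 eps He). apply filter_imp.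
  intros r; rewrite Rmult_comm; auto. Qed.

Lemma Bd_mult g h : Bd F g -> Bd F h -> Bd F (fun r => g r * h r).
Proof.
  intros [M HM] [N HN]. exists (Rabs M * Rabs N).
  generalize (@filter_and _ F FF _ _ HM HN). apply filter_imp. intros r [h1 h2].
  rewrite Rabs_mult. apply Rmult_le_compat; try apply Rabs_pos;
  eapply Rle_trans; eauto; apply Rle_abs.
Qed.

Lemma Bd_plus g h : Bd F g -> Bd F h -> Bd F (fun r => g r + h r).
Proof.
  intros [M HM] [N HN]. exists (M + N).
  generalize (@filter_and _ F FF _ _ HM HN). apply filter_imp. intros r [h1 h2].
  eapply Rle_trans; [apply Rabs_triang|lra].
Qed.

Lemma Bd_const c : Bd F (fun _ => c).
Proof. exists (Rabs c). apply filter_forall. intros; lra. Qed.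

Lemma Z_plus g h : Z F g -> Z F h -> Z F (fun r => g r + h r).
Proof.
  intros Hg Hh eps He.
  generalize (@filter_and _ F FF _ _ (Hg (eps/2) ltac:(lra)) (Hh (eps/2) ltac:(lra))).
  apply filter_imp. intros r [h1 h2].
  eapply Rle_lt_trans; [apply Rabs_triang|lra].
Qed.

Lemma Z_opp g : Z F g -> Z F (fun r => - g r).
Proof. intros H eps He. generalize (H eps He). apply filter_imp. intros r; rewrite Rabs_Ropp; auto. Qed.

Lemma Z_ext g h : (forall r, g r = h r) -> Z F g -> Z F h.
Proof. intros E H eps He. generalize (H eps He). apply filter_imp. intros r; rewrite E; auto. Qed.

Lemma Bd_ext g h : (forall r, g r = h r) -> Bd F g -> Bd F h.
Proof. intros E [M H]. exists M. generalize H. apply filter_imp. intros r; rewrite E; auto. Qed.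

End FL.

Lemma cont01_comp (G g : R -> R) : cont_on_01 g -> (forall x, ex_derive G x) -> cont_on_01 (fun r => G (g r)).
Proof.
  intros Hg HG r Hr. eapply filterlim_comp; [apply Hg; exact Hr|].
  apply (ex_derive_continuous (K := R_AbsRing) (V := R_NormedModule)). apply HG.
Qed.

Lemma cont01_mult (g h : R -> R) : cont_on_01 g -> cont_on_01 h -> cont_on_01 (fun r => g r * h r).
Proof.
  intros Hg Hh r Hr. eapply filterlim_comp_2; [apply Hg; exact Hr|apply Hh; exact Hr|].
  apply (filterlim_mult (K := R_AbsRing)).
Qed.

Lemma cont01_Zr g x : cont_on_01 g -> 0 <= x < 1 -> Z (at_right x) (fun r => g r - g x).
Proof.
  intros Hg Hx eps He. destruct (cont01_eps g Hg x ltac:(lra) eps He) as [d [Hd H]].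
  apply at_right_iff. exists (Rmin d (1 - x)). split; [apply Rmin_pos; lra|].
  intros r Hr. pose proof (Rmin_l d (1-x)). pose proof (Rmin_r d (1-x)).
  apply H; [lra|]. rewrite Rabs_right; lra.
Qed.

Lemma cont01_Zl g : cont_on_01 g -> Z (at_left 1) (fun r => g r - g 1).
Proof.
  intros Hg eps He. destruct (cont01_eps g Hg 1 ltac:(lra) eps He) as [d [Hd H]].
  apply at_left_iff. exists (Rmin d 1). split; [apply Rmin_pos; lra|].
  intros r Hr. pose proof (Rmin_l d 1). pose proof (Rmin_r d 1).
  apply H; [lra|]. rewrite Rabs_left; lra.
Qed.

Lemma Z_shift_Bd {F} {FF : Filter F} g c : Z F (fun r => g r - c) -> Bd F g.
Proof.
  intros H. apply Bd_ext with (fun r => (g r - c) + c); [intros; ring|].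
  apply Bd_plus; [apply Z_Bd; auto|apply Bd_const].
Qed.

Lemma cont01_Bdr g x : cont_on_01 g -> 0 <= x < 1 -> Bd (at_right x) g.
Proof. intros; eapply Z_shift_Bd; apply cont01_Zr; eauto. Qed.

Lemma cont01_Bdl g : cont_on_01 g -> Bd (at_left 1) g.
Proof. intros; eapply Z_shift_Bd; apply cont01_Zl; eauto. Qed.

Lemma Z_id0 : Z (at_right 0) (fun r => r).
Proof.
  intros eps He. apply at_right_iff. exists eps. split; auto. intros r Hr.
  rewrite Rabs_right; lra.
Qed.

Lemma is_derive_eq (g : R -> R) x l l' : is_derive g x l -> l = l' -> is_derive g x l'.
Proof. intros H ->; exact H. Qed.

Section RS.
Variable q : R -> R -> R.
Variable y : R -> R.
Hypothesis Hy : radial_solution q y.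

Lemma rs_d1 r : 0 < r < 1 -> is_derive y r (Derive y r).
Proof. intros Hr. apply Derive_correct. destruct Hy as [_ [H _]]. apply H; auto. Qed.

Lemma rs_d2 r : 0 < r < 1 -> is_derive (Derive y) r (Derive (Derive y) r).
Proof. intros Hr. apply Derive_correct. destruct Hy as [_ [H _]]. apply H; auto. Qed.

Lemma rs_G r : 0 < r < 1 -> is_derive (fun r => r * Derive y r) r (- r * q r (y r)).
Proof.
  intros Hr. destruct Hy as [_ [_ [Hode _]]]. specialize (Hode r Hr).
  assert (H := is_derive_mult (fun r => r) (Derive y) r 1 _ (is_derive_id r) (rs_d2 r Hr) Rmult_comm).
  apply (is_derive_eq _ _ _ _ H). change (1 * Derive y r + r * Derive (Derive y) r = - r * q r (y r)).
  assert (E : Derive (Derive y) r = - / r * Derive y r - q r (y r)) by lra.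
  rewrite E. field. lra.
Qed.

End RS.

Section RS2.
Variable q : R -> R -> R.
Variable y : R -> R.
Hypothesis Hy : radial_solution q y.

Lemma rs_cont : cont_on_01 y.
Proof. destruct Hy; auto. Qed.

Lemma rs_lim0 : Bd (at_right 0) (fun r => q r (y r)) -> Z (at_right 0) (fun r => r * Derive y r).
Proof.
  intros [M HM] eps He. apply at_right_iff in HM. destruct HM as [dl [Hdl HM]].
  destruct (cont01_eps y rs_cont 0 ltac:(lra) (eps/8) ltac:(lra)) as [d [Hd Hc]].
  assert (HM0 : 0 <= M). { specialize (HM (dl/2) ltac:(lra)). pose proof (Rabs_pos (q (dl/2) (y (dl/2)))). lra. }
  set (e2 := eps / (2 * (M + 1))).
  assert (He2 : 0 < e2) by (unfold e2; apply Rdiv_lt_0_compat; lra).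
  assert (HMe : M * e2 <= eps / 2).
  { unfold e2. apply Rmult_le_reg_r with (2 * (M + 1)); [lra|].
    field_simplify; [|lra]. nra. }
  apply at_right_iff. exists (Rmin (Rmin dl 1) (Rmin d e2)).
  pose proof (Rmin_l (Rmin dl 1) (Rmin d e2)). pose proof (Rmin_r (Rmin dl 1) (Rmin d e2)).
  pose proof (Rmin_l dl 1). pose proof (Rmin_r dl 1). pose proof (Rmin_l d e2). pose proof (Rmin_r d e2).
  split. { repeat apply Rmin_pos; lra. }
  intros r Hr.
  destruct (mvt y (Derive y) (r/2) r ltac:(lra)) as [t [Ht Et]].
  { intros c Hc'. apply rs_d1 with q; auto; lra. }
  destruct (mvt (fun r => r * Derive y r) (fun r => - r * q r (y r)) t r ltac:(lra)) as [c [Hc' Ec]].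
  { intros c Hc'. apply rs_G; auto; lra. }
  simpl in Ec.
  assert (B1 := Hc r ltac:(lra) ltac:(rewrite Rabs_right; lra)).
  assert (B2 := Hc (r/2) ltac:(lra) ltac:(rewrite Rabs_right; lra)).
  assert (Bq := HM c ltac:(lra)).
  assert (A1 : Rabs (Derive y t) * (r / 2) < eps / 4).
  { replace (Rabs (Derive y t) * (r/2)) with (Rabs (y r - y (r/2))).
    2:{ rewrite Et, Rabs_mult, (Rabs_right (r - r/2)) by lra. f_equal. lra. }
    replace (y r - y (r/2)) with ((y r - y 0) - (y (r/2) - y 0)) by ring.
    eapply Rle_lt_trans; [apply Rabs_triang|]. rewrite Rabs_Ropp. lra. }
  assert (A2 : Rabs (t * Derive y t) < eps / 2).
  { rewrite Rabs_mult, Rabs_right by lra. pose proof (Rabs_pos (Derive y t)). nra. }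
  assert (A3 : Rabs (r * Derive y r - t * Derive y t) <= M * e2).
  { rewrite Ec, !Rabs_mult, Rabs_Ropp, (Rabs_right c), (Rabs_right (r - t)) by lra.
    pose proof (Rabs_pos (q c (y c))).
    apply Rle_trans with (1 * M * r); [|nra].
    apply Rmult_le_compat; try nra. }
  replace (r * Derive y r) with ((r * Derive y r - t * Derive y t) + t * Derive y t) by ring.
  eapply Rle_lt_trans; [apply Rabs_triang|]. lra.
Qed.

Lemma rs_bd1 : Bd (at_left 1) (fun r => q r (y r)) -> Bd (at_left 1) (fun r => r * Derive y r).
Proof.
  intros [M HM]. apply at_left_iff in HM. destruct HM as [dl [Hdl HM]].
  set (e := Rmin dl (1/2)). assert (He : 0 < e) by (apply Rmin_pos; lra).
  pose proof (Rmin_l dl (1/2)). pose proof (Rmin_r dl (1/2)). fold e in H, H0.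
  set (r0 := 1 - e/2).
  exists (Rabs (r0 * Derive y r0) + Rabs M). apply at_left_iff. exists (e/2). split; [lra|].
  intros r Hr. destruct (Req_dec r r0) as [E|E].
  { rewrite E. pose proof (Rabs_pos M). lra. }
  destruct (mvt (fun r => r * Derive y r) (fun r => - r * q r (y r)) r0 r ltac:(unfold r0 in *; lra)) as [c [Hc' Ec]].
  { intros c Hc'. apply rs_G; auto; unfold r0 in *; lra. }
  simpl in Ec.
  assert (Bq := HM c ltac:(unfold r0 in *; lra)).
  assert (A3 : Rabs (r * Derive y r - r0 * Derive y r0) <= Rabs M).
  { rewrite Ec, !Rabs_mult, Rabs_Ropp, (Rabs_right c), (Rabs_right (r - r0)) by (unfold r0 in *; lra).
    pose proof (Rabs_pos (q c (y c))). pose proof (Rle_abs M).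
    unfold r0 in *.
    assert (0 <= c * Rabs (q c (y c)) <= Rabs M) by (split; nra).
    nra. }
  replace (r * Derive y r) with ((r * Derive y r - r0 * Derive y r0) + r0 * Derive y r0) by ring.
  eapply Rle_trans; [apply Rabs_triang|]. lra.
Qed.

End RS2.


Lemma dec_neg g b : (forall s t, 0 < s < t -> t < b -> g t < g s) -> Z (at_right 0) g ->
  forall t, 0 < t < b -> g t < 0.
Proof.
  intros Hdec HZ t Ht. destruct (Rlt_dec (g t) 0) as [h|h]; auto. exfalso.
  assert (H1 : g t < g (t/2)) by (apply Hdec; lra).
  destruct (proj1 (at_right_iff 0 _) (HZ (g (t/2)) ltac:(lra))) as [e [He H]].
  set (r := Rmin e (t/2) / 2). pose proof (Rmin_l e (t/2)). pose proof (Rmin_r e (t/2)).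
  assert (Hr : 0 < r) by (unfold r; apply Rdiv_lt_0_compat; [apply Rmin_pos|]; lra).
  specialize (H r ltac:(unfold r in *; lra)).
  assert (g (t/2) < g r) by (apply Hdec; unfold r in *; lra).
  pose proof (Rle_abs (g r)). lra.
Qed.

Lemma first_zero g a b : 0 <= a < b -> b <= 1 -> cont_on_01 g -> g b <= 0 ->
  (exists d, 0 < d /\ forall t, a < t < a + d -> g t > 0) ->
  exists xi, a < xi <= b /\ g xi = 0 /\ forall t, a < t < xi -> g t > 0.
Proof.
  intros Hab Hb Hg Hgb [d [Hd Hpos]].
  set (E := fun s => a < s <= b /\ forall t, a < t < s -> g t > 0).
  set (s0 := a + Rmin d (b - a) / 2).
  pose proof (Rmin_l d (b-a)). pose proof (Rmin_r d (b-a)).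
  assert (Hm : 0 < Rmin d (b - a)) by (apply Rmin_pos; lra).
  assert (Es0 : E s0). { unfold E, s0. split; [lra|]. intros t Ht. apply Hpos. lra. }
  destruct (completeness E) as [xi [Hub Hlub]].
  { exists b. intros s [Hs _]. lra. }
  { exists s0; auto. }
  assert (Hxi1 : s0 <= xi) by (apply Hub; auto).
  assert (Hxi2 : xi <= b) by (apply Hlub; intros s [Hs _]; lra).
  assert (Hin : forall t, a < t < xi -> g t > 0).
  { intros t Ht. destruct (classic (exists s, E s /\ t < s)) as [[s [[_ Hs] Hts]]|Hn].
    - apply Hs. lra.
    - exfalso. assert (xi <= t); [|lra]. apply Hlub. intros s Es.
      destruct (Rle_dec s t); auto. exfalso. apply Hn. exists s. split; auto. lra. }
  exists xi. split; [unfold s0 in *; lra|]. split; auto.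
  destruct (Rtotal_order (g xi) 0) as [Hn|[Hz|Hp]]; auto; exfalso.
  - destruct (cont01_eps g Hg xi ltac:(unfold s0 in *; lra) (- g xi) ltac:(lra)) as [e [He Hc]].
    set (t := xi - Rmin e (xi - a) / 2). pose proof (Rmin_l e (xi-a)). pose proof (Rmin_r e (xi-a)).
    assert (0 < Rmin e (xi - a)) by (apply Rmin_pos; unfold s0 in *; lra).
    assert (Ht : a < t < xi) by (unfold t; lra).
    specialize (Hin t Ht). specialize (Hc t ltac:(lra) ltac:(rewrite Rabs_left; unfold t; lra)).
    pose proof (Rle_abs (g t - g xi)). lra.
  - destruct (Req_dec xi b) as [Eb|Eb]; [subst; lra|].
    destruct (cont01_eps g Hg xi ltac:(unfold s0 in *; lra) (g xi) ltac:(lra)) as [e [He Hc]].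
    set (s' := xi + Rmin e (b - xi) / 2). pose proof (Rmin_l e (b-xi)). pose proof (Rmin_r e (b-xi)).
    assert (0 < Rmin e (b - xi)) by (apply Rmin_pos; lra).
    assert (E s').
    { split; [unfold s0, s' in *; lra|]. intros t Ht. destruct (Rlt_dec t xi); [apply Hin; lra|].
      assert (Hct := Hc t ltac:(unfold s0, s' in *; lra) ltac:(rewrite Rabs_right; unfold s' in *; lra)).
      pose proof (Rle_abs (- (g t - g xi))). rewrite Rabs_Ropp in H4. lra. }
    assert (s' <= xi) by (apply Hub; auto). unfold s' in *; lra.
Qed.

Lemma deriv_Zr g x l : is_derive g x l -> g x = 0 -> Z (at_right x) g.
Proof.
  intros Hd H0 eps He. destruct (deriv_cont_eps g x l Hd eps He) as [d [Hd' Hc]].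
  apply at_right_iff. exists d. split; auto. intros r Hr.
  specialize (Hc r ltac:(rewrite Rabs_right; lra)). rewrite H0, Rminus_0_r in Hc. exact Hc.
Qed.

Lemma deriv_zero_left g x l : is_derive g x l -> g x = 0 ->
  (exists d, 0 < d /\ forall s, x - d < s < x -> g s = 0) -> l = 0.
Proof.
  intros Hd H0 [d [Hdp Hs]]. apply is_derive_Reals in Hd.
  destruct (Req_dec l 0) as [E|E]; auto. exfalso.
  destruct (Hd (Rabs l) ltac:(apply Rabs_pos_lt; auto)) as [e He].
  set (h := - Rmin e d / 2). pose proof (Rmin_l e d). pose proof (Rmin_r e d).
  assert (0 < Rmin e d) by (apply Rmin_pos; [apply cond_pos|lra]).
  specialize (He h ltac:(unfold h; lra) ltac:(unfold h; rewrite Rabs_left; lra)).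
  rewrite Hs in He by (unfold h; lra). rewrite H0 in He.
  replace ((0 - 0) / h - l) with (- l) in He by (field; unfold h; lra).
  rewrite Rabs_Ropp in He. lra.
Qed.

Lemma neg_after g x l : is_derive g x l -> l < 0 -> g x = 0 ->
  exists d, 0 < d /\ forall s, x < s < x + d -> g s < 0.
Proof.
  intros Hd Hl H0. apply is_derive_Reals in Hd.
  destruct (Hd (- l) ltac:(lra)) as [e He]. exists e. split; [apply cond_pos|].
  intros s Hs. specialize (He (s - x) ltac:(lra) ltac:(rewrite Rabs_right; lra)).
  replace (x + (s - x)) with s in He by ring. rewrite H0, Rminus_0_r in He.
  assert (Hq : g s / (s - x) < 0).
  { pose proof (Rle_abs (g s / (s - x) - l)). lra. }
  destruct (Rlt_dec (g s) 0) as [h|h]; auto. exfalso.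
  assert (0 <= g s / (s - x)) by (apply Rmult_le_pos; [lra|left; apply Rinv_0_lt_compat; lra]). lra.
Qed.

Lemma incr_by g dg a b : a < b -> (forall c, a <= c <= b -> is_derive g c (dg c)) ->
  (forall c, a < c < b -> 0 < dg c) -> g a < g b.
Proof.
  intros Hab Hd Hp. destruct (mvt g dg a b Hab Hd) as [c [Hc E]].
  specialize (Hp c Hc). assert (0 < dg c * (b - a)) by (apply Rmult_lt_0_compat; lra). lra.
Qed.

Lemma decr_by g dg a b : a < b -> (forall c, a <= c <= b -> is_derive g c (dg c)) ->
  (forall c, a < c < b -> dg c < 0) -> g b < g a.
Proof.
  intros Hab Hd Hp. destruct (mvt g dg a b Hab Hd) as [c [Hc E]].
  specialize (Hp c Hc). assert (0 < - dg c * (b - a)) by (apply Rmult_lt_0_compat; lra). lra.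
Qed.

Ltac rsimpl := do 3 (unfold plus, mult, opp, minus, scal, one, zero; simpl).

Section Main.
Variables f u w : R -> R.
Hypothesis Hfd : forall x, ex_derive f x.
Hypothesis Hf1d : forall x, ex_derive (Derive f) x.
Hypothesis Hfpos : forall x, 0 < x -> 0 < f x.
Hypothesis Hf1pos : forall x, 0 < x -> 0 < Derive f x.
Hypothesis Hlc : forall x, 0 < x -> Derive (Derive f) x * f x - (Derive f x) ^ 2 < 0.
Hypothesis Hsup : forall x, 0 < x -> x * Derive f x > f x.
Hypothesis Hu : radial_solution (fun _ y => f y) u.
Hypothesis Hupos : forall r, 0 <= r < 1 -> 0 < u r.
Hypothesis Hw : radial_solution (fun r y => Derive f (u r) * y) w.

Lemma ucont : cont_on_01 u. Proof. exact (rs_cont _ _ Hu). Qed.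
Lemma wcont : cont_on_01 w. Proof. exact (rs_cont _ _ Hw). Qed.
Lemma fu_cont : cont_on_01 (fun r => f (u r)). Proof. apply cont01_comp; [exact ucont|exact Hfd]. Qed.
Lemma f1u_cont : cont_on_01 (fun r => Derive f (u r)). Proof. apply cont01_comp; [exact ucont|exact Hf1d]. Qed.
Lemma qw_cont : cont_on_01 (fun r => Derive f (u r) * w r). Proof. apply cont01_mult; [exact f1u_cont|exact wcont]. Qed.

Lemma G0 : Z (at_right 0) (fun r => r * Derive u r).
Proof. apply (rs_lim0 _ _ Hu). apply (cont01_Bdr _ 0 fu_cont). lra. Qed.
Lemma H0 : Z (at_right 0) (fun r => r * Derive w r).
Proof. apply (rs_lim0 _ _ Hw). apply (cont01_Bdr _ 0 qw_cont). lra. Qed.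
Lemma G1 : Bd (at_left 1) (fun r => r * Derive u r).
Proof. apply (rs_bd1 _ _ Hu). apply (cont01_Bdl _ fu_cont). Qed.
Lemma H1 : Bd (at_left 1) (fun r => r * Derive w r).
Proof. apply (rs_bd1 _ _ Hw). apply (cont01_Bdl _ qw_cont). Qed.

Lemma dG r : 0 < r < 1 -> is_derive (fun r => r * Derive u r) r (- r * f (u r)).
Proof. intros; apply (rs_G _ _ Hu); auto. Qed.
Lemma dH r : 0 < r < 1 -> is_derive (fun r => r * Derive w r) r (- r * (Derive f (u r) * w r)).
Proof. intros; apply (rs_G _ _ Hw); auto. Qed.
Lemma du r : 0 < r < 1 -> is_derive u r (Derive u r).
Proof. intros; apply (rs_d1 _ _ Hu); auto. Qed.
Lemma dw r : 0 < r < 1 -> is_derive w r (Derive w r).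
Proof. intros; apply (rs_d1 _ _ Hw); auto. Qed.
Lemma df x : is_derive f x (Derive f x).
Proof. apply Derive_correct, Hfd. Qed.
Lemma df1 x : is_derive (Derive f) x (Derive (Derive f) x).
Proof. apply Derive_correct, Hf1d. Qed.

Lemma Gneg r : 0 < r < 1 -> r * Derive u r < 0.
Proof.
  apply (dec_neg (fun r => r * Derive u r) 1); [|exact G0].
  intros s t Hs Ht.
  destruct (mvt _ _ s t ltac:(lra) (fun c Hc => dG c ltac:(lra))) as [c [Hc E]].
  assert (0 < f (u c)) by (apply Hfpos, Hupos; lra).
  assert (0 < c * f (u c) * (t - s)) by (apply Rmult_lt_0_compat; [apply Rmult_lt_0_compat|]; lra).
  lra.
Qed.

Lemma u1neg r : 0 < r < 1 -> Derive u r < 0.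
Proof. intros Hr. pose proof (Gneg r Hr). nra. Qed.

Lemma udec s t : 0 < s < t -> t < 1 -> u t < u s.
Proof.
  intros Hs Ht.
  destruct (mvt _ _ s t ltac:(lra) (fun c Hc => du c ltac:(lra))) as [c [Hc E]].
  pose proof (u1neg c ltac:(lra)). nra.
Qed.

Lemma Gdec s t : 0 < s < t -> t < 1 -> t * Derive u t < s * Derive u s.
Proof.
  intros Hs Ht.
  destruct (mvt _ _ s t ltac:(lra) (fun c Hc => dG c ltac:(lra))) as [c [Hc E]].
  assert (0 < f (u c)) by (apply Hfpos, Hupos; lra).
  assert (0 < c * f (u c) * (t - s)) by (apply Rmult_lt_0_compat; [apply Rmult_lt_0_compat|]; lra).
  lra.
Qed.

Lemma hinc x y : 0 < x < y -> f x / Derive f x < f y / Derive f y.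
Proof.
  intros Hxy.
  destruct (mvt (fun z => f z / Derive f z)
     (fun z => (Derive f z * Derive f z - f z * Derive (Derive f) z) / (Derive f z) ^ 2) x y ltac:(lra)) as [c [Hc E]].
  { intros c Hc. apply is_derive_div; [apply df|apply df1|].
    pose proof (Hf1pos c ltac:(lra)); lra. }
  assert (Hp : 0 < (Derive f c * Derive f c - f c * Derive (Derive f) c) / Derive f c ^ 2).
  { pose proof (Hlc c ltac:(lra)). pose proof (Hf1pos c ltac:(lra)).
    apply Rdiv_lt_0_compat; nra. }
  assert (0 < (Derive f c * Derive f c - f c * Derive (Derive f) c) / Derive f c ^ 2 * (y - x))
    by (apply Rmult_lt_0_compat; lra).
  lra.
Qed.


Lemma dWu r : 0 < r < 1 -> is_derive (fun r => r * Derive u r * w r - u r * (r * Derive w r)) r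
   (r * w r * (u r * Derive f (u r) - f (u r))).
Proof.
  intros Hr.
  assert (A := is_derive_mult _ _ r _ _ (dG r Hr) (dw r Hr) Rmult_comm).
  assert (B := is_derive_mult _ _ r _ _ (du r Hr) (dH r Hr) Rmult_comm).
  assert (C := is_derive_minus _ _ r _ _ A B).
  apply (is_derive_eq _ _ _ _ C). rsimpl. ring.
Qed.

Lemma dWP c r : 0 < r < 1 -> is_derive
   (fun r => - (r * r * f (u r)) * w r - (r * Derive u r + c) * (r * Derive w r)) r
   (r * w r * (c * Derive f (u r) - 2 * f (u r))).
Proof.
  intros Hr.
  assert (Rr := is_derive_mult _ _ r _ _ (is_derive_id r) (is_derive_id r) Rmult_comm).
  assert (Fu := is_derive_comp f u r _ _ (df (u r)) (du r Hr)).
  assert (A := is_derive_mult _ _ r _ _ Rr Fu Rmult_comm).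
  assert (A' := is_derive_opp _ r _ A).
  assert (A2 := is_derive_mult _ _ r _ _ A' (dw r Hr) Rmult_comm).
  assert (B := is_derive_plus _ _ r _ _ (dG r Hr) (is_derive_const c r)).
  assert (B2 := is_derive_mult _ _ r _ _ B (dH r Hr) Rmult_comm).
  assert (C := is_derive_minus _ _ r _ _ A2 B2).
  apply (is_derive_eq _ _ _ _ C). rsimpl. ring.
Qed.


Lemma nopp_ex : forall x, ex_derive (fun x => - x) x.
Proof. intros x. auto_derive. auto. Qed.

Lemma main_pos : 0 < w 0 -> False.
Proof.
  intros Hw0.
  assert (Hw1 : w 1 = 0) by (destruct Hw as [_ [_ [_ [_ E]]]]; exact E).
  assert (Hu1 : u 1 = 0) by (destruct Hu as [_ [_ [_ [_ E]]]]; exact E).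
  destruct (cont01_eps w wcont 0 ltac:(lra) (w 0) Hw0) as [d0 [Hd0 Hc0]].
  destruct (first_zero w 0 1 ltac:(lra) ltac:(lra) wcont) as [x1 [Hx1 [Hwx1 Hwp]]].
  { lra. }
  { exists (Rmin d0 1). split; [apply Rmin_pos; lra|]. intros t Ht.
    pose proof (Rmin_l d0 1); pose proof (Rmin_r d0 1).
    specialize (Hc0 t ltac:(lra) ltac:(rewrite Rabs_right; lra)).
    pose proof (Rle_abs (-(w t - w 0))) as Hab. rewrite Rabs_Ropp in Hab. lra. }
  set (Wu := fun r => r * Derive u r * w r - u r * (r * Derive w r)).
  assert (Wu0 : Z (at_right 0) Wu).
  { apply Z_ext with (fun r => r * Derive u r * w r + - (u r * (r * Derive w r))); [intros; unfold Wu; ring|].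
    apply Z_plus.
    - apply Z_mult; [exact G0|apply (cont01_Bdr _ 0 wcont); lra].
    - apply Z_opp, Z_mult'; [apply (cont01_Bdr _ 0 ucont); lra|exact H0]. }
  assert (dWu' : forall c, 0 < c < 1 -> c < x1 -> 0 < c * w c * (u c * Derive f (u c) - f (u c))).
  { intros c Hc Hcx. assert (0 < u c) by (apply Hupos; lra). pose proof (Hsup (u c) H).
    pose proof (Hwp c ltac:(lra)).
    apply Rmult_lt_0_compat; [apply Rmult_lt_0_compat|]; lra. }
  assert (Wupos : forall t, 0 < t < x1 -> t < 1 -> 0 < Wu t).
  { intros t Ht Ht1.
    assert (- Wu t < 0); [|lra].
    apply (dec_neg (fun r => - Wu r) (Rmin x1 1)).
    - intros s t' Hs Ht'. pose proof (Rmin_l x1 1). pose proof (Rmin_r x1 1).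
      assert (Wu s < Wu t'); [|lra].
      apply (incr_by Wu (fun r => r * w r * (u r * Derive f (u r) - f (u r))) s t' ltac:(lra)).
      + intros c Hc. apply dWu; lra.
      + intros c Hc. apply dWu'; lra.
    - apply Z_opp; exact Wu0.
    - split; [lra|]. apply Rmin_glb_lt; lra. }
  assert (Hx1' : x1 < 1).
  { destruct (Rlt_dec x1 1) as [h|h]; auto. exfalso. assert (Ex : x1 = 1) by lra.
    assert (Wh : 0 < Wu (1/2)) by (apply Wupos; lra).
    assert (Wl : Z (at_left 1) Wu).
    { apply Z_ext with (fun r => r * Derive u r * (w r - w 1) + - ((u r - u 1) * (r * Derive w r)));
        [intros; unfold Wu; rewrite Hw1, Hu1; ring|].
      apply Z_plus.
      - apply Z_mult'; [exact G1|apply cont01_Zl, wcont].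
      - apply Z_opp, Z_mult; [apply cont01_Zl, ucont|exact H1]. }
    destruct (proj1 (at_left_iff 1 _) (Wl (Wu (1/2)) Wh)) as [e [He Hl]].
    set (r := 1 - Rmin e (1/2) / 2). pose proof (Rmin_l e (1/2)). pose proof (Rmin_r e (1/2)).
    assert (0 < Rmin e (1/2)) by (apply Rmin_pos; lra).
    specialize (Hl r ltac:(unfold r; lra)).
    assert (Wu (1/2) < Wu r).
    { apply (incr_by Wu (fun r => r * w r * (u r * Derive f (u r) - f (u r))) (1/2) r ltac:(unfold r; lra)).
      + intros c Hc. apply dWu; unfold r in *; lra.
      + intros c Hc. apply dWu'; unfold r in *; lra. }
    pose proof (Rle_abs (Wu r)). lra. }
  assert (Wx1 : 0 < Wu x1).
  { apply Rlt_trans with (Wu (x1/2)); [apply Wupos; lra|].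
    apply (incr_by Wu (fun r => r * w r * (u r * Derive f (u r) - f (u r))) (x1/2) x1 ltac:(lra)).
    + intros c Hc. apply dWu; lra.
    + intros c Hc. apply dWu'; lra. }
  assert (Hdw1 : Derive w x1 < 0).
  { unfold Wu in Wx1. rewrite Hwx1 in Wx1. assert (0 < u x1) by (apply Hupos; lra).
    destruct (Rlt_or_le (Derive w x1) 0) as [h|h]; auto. exfalso.
    assert (0 <= u x1 * (x1 * Derive w x1)) by (apply Rmult_le_pos; [lra| apply Rmult_le_pos; lra]). lra. }
  destruct (neg_after w x1 _ (dw x1 ltac:(lra)) Hdw1 Hwx1) as [d1 [Hd1 Hneg1]].
  destruct (first_zero (fun r => - w r) x1 1 ltac:(lra) ltac:(lra)) as [x2 [Hx2 [Hwx2 Hwn]]].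
  { apply (cont01_comp (fun x => - x) w wcont nopp_ex). }
  { lra. }
  { exists d1. split; auto. intros t Ht. specialize (Hneg1 t Ht). lra. }
  simpl in Hwx2, Hwn.
  set (c := - (x1 * Derive u x1)).
  assert (Hc : 0 < c) by (unfold c; pose proof (Gneg x1 ltac:(lra)); lra).
  set (WP := fun r => - (r * r * f (u r)) * w r - (r * Derive u r + c) * (r * Derive w r)).
  assert (WP0 : Z (at_right 0) WP).
  { apply Z_ext with (fun r => r * (r * f (u r) * w r * (-1)) + - ((r * Derive u r + c) * (r * Derive w r)));
      [intros; unfold WP; ring|].
    apply Z_plus.
    - apply Z_mult; [exact Z_id0|].
      apply Bd_mult; [|apply Bd_const]. apply Bd_mult; [|apply (cont01_Bdr _ 0 wcont); lra].
      apply Bd_mult; [apply Z_Bd, Z_id0|apply (cont01_Bdr _ 0 fu_cont); lra].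
    - apply Z_opp, Z_mult'; [|exact H0]. apply Bd_plus; [apply Z_Bd, G0|apply Bd_const]. }
  assert (WPx1 : WP x1 = 0) by (unfold WP, c; rewrite Hwx1; ring).
  assert (Hrs : exists rs, 0 < rs < x1 /\ 0 <= c * Derive f (u rs) - 2 * f (u rs)).
  { apply NNPP; intro Hn.
    assert (Hall : forall t, 0 < t < x1 -> c * Derive f (u t) - 2 * f (u t) < 0).
    { intros t Ht. apply Rnot_le_lt; intro. apply Hn; exists t; auto. }
    assert (Hd : forall s t, 0 < s < t -> t <= x1 -> WP t < WP s).
    { intros s t Hs Ht. apply (decr_by WP (fun r => r * w r * (c * Derive f (u r) - 2 * f (u r))) s t ltac:(lra)).
      + intros c' Hc'. apply dWP; lra.
      + intros c' Hc'. pose proof (Hwp c' ltac:(lra)). pose proof (Hall c' ltac:(lra)).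
        assert (0 < c' * w c') by (apply Rmult_lt_0_compat; lra). nra. }
    assert (A1 : 0 < WP (x1/2)) by (rewrite <- WPx1; apply Hd; lra).
    assert (A2 : WP (x1/2) < 0).
    { apply (dec_neg WP x1); [|exact WP0|lra]. intros s t Hs Ht. apply Hd; lra. }
    lra. }
  destruct Hrs as [rs [Hrs1 Hrs2]].
  assert (Hbr : forall r, rs < r < 1 -> 0 < c * Derive f (u r) - 2 * f (u r)).
  { intros r Hr.
    assert (Hur : 0 < u r) by (apply Hupos; lra).
    assert (Hurs : 0 < u rs) by (apply Hupos; lra).
    assert (Hlt : u r < u rs) by (apply udec; lra).
    pose proof (hinc (u r) (u rs) ltac:(lra)) as Hh.
    pose proof (Hf1pos _ Hur) as A. pose proof (Hf1pos _ Hurs) as B.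
    set (q1 := f (u r) / Derive f (u r)) in *. set (q2 := f (u rs) / Derive f (u rs)) in *.
    assert (E1 : f (u r) = q1 * Derive f (u r)) by (unfold q1; field; lra).
    assert (E2 : f (u rs) = q2 * Derive f (u rs)) by (unfold q2; field; lra).
    rewrite E2 in Hrs2. rewrite E1.
    assert (q2 * 2 <= c) by nra.
    nra. }
  assert (WPneg : forall r, x1 < r < x2 -> WP r < 0).
  { intros r Hr. rewrite <- WPx1. apply (decr_by WP (fun r => r * w r * (c * Derive f (u r) - 2 * f (u r))) x1 r ltac:(lra)).
    + intros c' Hc'. apply dWP; lra.
    + intros c' Hc'. pose proof (Hwn c' ltac:(lra)). pose proof (Hbr c' ltac:(lra)).
      assert (c' * w c' < 0) by nra. nra. }
  assert (Hdwn : forall r, x1 < r < x2 -> Derive w r < 0).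
  { intros r Hr. pose proof (WPneg r Hr) as HW. unfold WP in HW.
    pose proof (Gdec x1 r ltac:(lra) ltac:(lra)) as HG. fold c in HG.
    assert (0 < f (u r)) by (apply Hfpos, Hupos; lra).
    pose proof (Hwn r Hr).
    assert (0 < - (r * r * f (u r)) * w r).
    { assert (0 < r * r * f (u r)) by (apply Rmult_lt_0_compat; nra). nra. }
    assert (r * Derive u r + c < 0) by (unfold c in *; lra).
    assert (r * Derive w r < 0) by nra. nra. }
  set (t := (x1 + x2) / 2).
  assert (Ht : w t < 0) by (pose proof (Hwn t ltac:(unfold t; lra)); lra).
  destruct (cont01_eps w wcont x2 ltac:(lra) (- w t / 2) ltac:(lra)) as [d [Hd Hcx]].
  set (s := x2 - Rmin d (x2 - t) / 2). pose proof (Rmin_l d (x2 - t)). pose proof (Rmin_r d (x2 - t)).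
  assert (0 < Rmin d (x2 - t)) by (apply Rmin_pos; unfold t; lra).
  assert (Hs : t < s < x2) by (unfold s; lra).
  assert (w s < w t).
  { apply (decr_by w (Derive w) t s ltac:(lra)).
    + intros c' Hc'. apply dw. unfold t in *; lra.
    + intros c' Hc'. apply Hdwn. unfold t in *; lra. }
  specialize (Hcx s ltac:(unfold t in *; lra) ltac:(rewrite Rabs_left; unfold s; lra)).
  assert (Ew2 : w x2 = 0) by lra. rewrite Ew2, Rminus_0_r in Hcx.
  pose proof (Rle_abs (- w s)) as Hab. rewrite Rabs_Ropp in Hab. lra.
Qed.

Lemma gron x0 : 0 <= x0 < 1 -> w x0 = 0 -> Z (at_right x0) (fun r => r * Derive w r) ->
  exists rho, 0 < rho /\ forall t, x0 < t < x0 + rho -> w t = 0.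
Proof.
  intros Hx0 Hwx0 HZ.
  destruct (cont01_Bdr _ x0 f1u_cont Hx0) as [A HA].
  assert (HZw : Z (at_right x0) w).
  { apply Z_ext with (fun r => w r - w x0); [intros; rewrite Hwx0; ring|]. apply cont01_Zr; auto; exact wcont. }
  destruct (Z_Bd _ HZw) as [K HK].
  apply at_right_iff in HA. destruct HA as [eA [HeA HA]].
  apply at_right_iff in HK. destruct HK as [eK [HeK HK]].
  set (A0 := Rabs A + 1). set (K0 := Rabs K).
  assert (HA0 : 0 < A0) by (unfold A0; pose proof (Rabs_pos A); lra).
  assert (HK0 : 0 <= K0) by (apply Rabs_pos).
  set (rho := Rmin (Rmin (Rmin eA eK) (1 - x0)) (/ (2 * A0))).
  assert (Hi : / (2 * A0) > 0) by (apply Rinv_0_lt_compat; lra).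
  assert (Hr1 : rho <= eA /\ rho <= eK /\ rho <= 1 - x0 /\ rho <= / (2 * A0)).
  { unfold rho. pose proof (Rmin_l (Rmin (Rmin eA eK) (1 - x0)) (/ (2 * A0))).
    pose proof (Rmin_r (Rmin (Rmin eA eK) (1 - x0)) (/ (2 * A0))).
    pose proof (Rmin_l (Rmin eA eK) (1 - x0)). pose proof (Rmin_r (Rmin eA eK) (1 - x0)).
    pose proof (Rmin_l eA eK). pose proof (Rmin_r eA eK). lra. }
  assert (Hrho : 0 < rho) by (unfold rho; repeat apply Rmin_pos; lra).
  assert (HAr : A0 * rho <= / 2).
  { destruct Hr1 as [_ [_ [_ h]]]. apply Rle_trans with (A0 * / (2 * A0)).
    - apply Rmult_le_compat_l; lra.
    - right. field. lra. }
  assert (Hrho1 : rho <= 1) by lra.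
  assert (HfA : forall t, x0 < t < x0 + rho -> Rabs (Derive f (u t)) <= A0).
  { intros t Ht. pose proof (HA t ltac:(lra)). pose proof (Rle_abs A). unfold A0. lra. }
  assert (Hind : forall n, forall t, x0 < t < x0 + rho -> Rabs (w t) <= K0 * (1/2) ^ n).
  { induction n as [|n IH].
    - intros t Ht. simpl. rewrite Rmult_1_r. pose proof (HK t ltac:(lra)). pose proof (Rle_abs K). unfold K0. lra.
    - set (B := K0 * (1/2) ^ n) in *.
      assert (HB : 0 <= B) by (unfold B; apply Rmult_le_pos; [lra|apply pow_le; lra]).
      assert (Hd : forall t, x0 < t < x0 + rho -> Rabs (Derive w t) <= A0 * B * (t - x0)).
      { intros t Ht.
        assert (Rabs (t * Derive w t) <= t * (A0 * B * (t - x0))).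
        { apply le_eps. intros eps He.
          destruct (proj1 (at_right_iff x0 _) (HZ eps He)) as [e [He' HZe]].
          set (s := x0 + Rmin e (t - x0) / 2). pose proof (Rmin_l e (t - x0)). pose proof (Rmin_r e (t - x0)).
          assert (0 < Rmin e (t - x0)) by (apply Rmin_pos; lra).
          assert (Hs : x0 < s < t) by (unfold s; lra).
          specialize (HZe s ltac:(unfold s; lra)).
          destruct (mvt (fun r => r * Derive w r) (fun r => - r * (Derive f (u r) * w r)) s t ltac:(lra)) as [c [Hc Ec]].
          { intros c Hc. apply dH. lra. }
          simpl in Ec.
          assert (Bc : Rabs (- c * (Derive f (u c) * w c) * (t - s)) <= t * (A0 * B * (t - x0))).
          { rewrite !Rabs_mult, Rabs_Ropp, (Rabs_right c), (Rabs_right (t - s)) by lra.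
            pose proof (HfA c ltac:(lra)). pose proof (IH c ltac:(lra)).
            pose proof (Rabs_pos (Derive f (u c))). pose proof (Rabs_pos (w c)).
            assert (Rabs (Derive f (u c)) * Rabs (w c) <= A0 * B) by (apply Rmult_le_compat; lra).
            assert (0 <= Rabs (Derive f (u c)) * Rabs (w c)) by (apply Rmult_le_pos; lra).
            assert (c * (Rabs (Derive f (u c)) * Rabs (w c)) <= t * (A0 * B)) by (apply Rmult_le_compat; lra).
            assert (0 <= c * (Rabs (Derive f (u c)) * Rabs (w c))) by (apply Rmult_le_pos; lra).
            rewrite <- !Rmult_assoc in *.
            apply Rmult_le_compat; try lra. }
          replace (t * Derive w t) with ((t * Derive w t - s * Derive w s) + s * Derive w s) by ring.
          eapply Rle_trans; [apply Rabs_triang|]. rewrite Ec. lra. }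
        rewrite Rabs_mult, (Rabs_right t) in H by lra.
        apply Rmult_le_reg_l with t; lra. }
      intros t Ht. replace (K0 * (1/2) ^ S n) with (B / 2) by (unfold B; simpl; field).
      apply le_eps. intros eps He.
      destruct (proj1 (at_right_iff x0 _) (HZw eps He)) as [e [He' HZe]].
      set (s := x0 + Rmin e (t - x0) / 2). pose proof (Rmin_l e (t - x0)). pose proof (Rmin_r e (t - x0)).
      assert (0 < Rmin e (t - x0)) by (apply Rmin_pos; lra).
      assert (Hs : x0 < s < t) by (unfold s; lra).
      specialize (HZe s ltac:(unfold s; lra)).
      destruct (mvt w (Derive w) s t ltac:(lra)) as [c [Hc Ec]].
      { intros c Hc. apply dw. lra. }
      assert (Bc : Rabs (Derive w c * (t - s)) <= B / 2).
      { rewrite Rabs_mult, (Rabs_right (t - s)) by lra.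
        pose proof (Hd c ltac:(lra)) as Hdc.
        apply Rle_trans with (A0 * B * rho * rho).
        - apply Rmult_le_compat; try lra; try apply Rabs_pos.
          apply Rle_trans with (1 := Hdc). apply Rmult_le_compat_l; [|lra].
          apply Rmult_le_pos; lra.
        - assert (A0 * rho * rho <= / 2) by nra. nra. }
      replace (w t) with ((w t - w s) + w s) by ring.
      eapply Rle_trans; [apply Rabs_triang|]. rewrite Ec. lra. }
  exists rho. split; auto. intros t Ht.
  destruct (Req_dec (w t) 0) as [h|h]; auto. exfalso.
  assert (Hwt : 0 < Rabs (w t)) by (apply Rabs_pos_lt; auto).
  destruct (pow_lt_1_zero (1/2) ltac:(rewrite Rabs_right; lra) (Rabs (w t) / (K0 + 1)) ltac:(apply Rdiv_lt_0_compat; lra)) as [N HN].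
  specialize (HN N (le_n N)). rewrite Rabs_right in HN by (apply Rle_ge, pow_le; lra).
  specialize (Hind N t Ht).
  assert (K0 * (1/2) ^ N <= K0 * (Rabs (w t) / (K0 + 1))) by (apply Rmult_le_compat_l; lra).
  assert (K0 * (Rabs (w t) / (K0 + 1)) < Rabs (w t)).
  { apply Rmult_lt_reg_r with (K0 + 1); [lra|]. field_simplify; lra. }
  lra.
Qed.


Lemma prop0 : w 0 = 0 -> forall t, 0 <= t <= 1 -> w t = 0.
Proof.
  intros Hw0.
  assert (Hw1 : w 1 = 0) by (destruct Hw as [_ [_ [_ [_ E]]]]; exact E).
  set (E := fun rho => 0 <= rho <= 1 /\ forall t, 0 <= t <= rho -> w t = 0).
  destruct (completeness E) as [rs [Hub Hlub]].
  { exists 1. intros s [Hs _]. lra. }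
  { exists 0. split; [lra|]. intros t Ht. replace t with 0 by lra. exact Hw0. }
  assert (E0 : E 0). { split; [lra|]. intros t Ht. replace t with 0 by lra. exact Hw0. }
  assert (Hrs0 : 0 <= rs) by (apply Hub; auto).
  assert (Hrs1 : rs <= 1) by (apply Hlub; intros s [Hs _]; lra).
  assert (Ha : forall t, 0 <= t < rs -> w t = 0).
  { intros t Ht. apply NNPP; intro Hn.
    assert (rs <= t); [|lra]. apply Hlub. intros s [Hs Hs'].
    destruct (Rle_dec s t) as [h|h]; auto. exfalso. apply Hn, Hs'. lra. }
  assert (Hb : w rs = 0).
  { destruct (Req_dec rs 0) as [Z0|Z0]; [rewrite Z0; exact Hw0|].
    apply NNPP; intro Hn.
    destruct (cont01_eps w wcont rs ltac:(lra) (Rabs (w rs)) ltac:(apply Rabs_pos_lt; auto)) as [d [Hd Hc]].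
    set (s := rs - Rmin d rs / 2). pose proof (Rmin_l d rs). pose proof (Rmin_r d rs).
    assert (0 < Rmin d rs) by (apply Rmin_pos; lra).
    specialize (Hc s ltac:(unfold s; lra) ltac:(rewrite Rabs_left; unfold s; lra)).
    rewrite (Ha s ltac:(unfold s; lra)) in Hc. rewrite Rminus_0_l, Rabs_Ropp in Hc. lra. }
  assert (Hrs : rs = 1).
  { destruct (Req_dec rs 1) as [h|h]; auto. exfalso.
    assert (HZ : Z (at_right rs) (fun r => r * Derive w r)).
    { destruct (Req_dec rs 0) as [Z0|Z0]; [rewrite Z0; exact H0|].
      apply (deriv_Zr _ rs _ (dH rs ltac:(lra))).
      assert (Dz : Derive w rs = 0).
      { apply (deriv_zero_left w rs _ (dw rs ltac:(lra)) Hb).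
        exists rs. split; [lra|]. intros s Hs. apply Ha. lra. }
      cbv beta. rewrite Dz. apply Rmult_0_r. }
    destruct (gron rs ltac:(lra) Hb HZ) as [rho [Hrho Hg]].
    set (r2 := Rmin (rs + rho / 2) 1). pose proof (Rmin_l (rs + rho/2) 1). pose proof (Rmin_r (rs + rho/2) 1).
    assert (r2 <= rs).
    { apply Hub. split; [unfold r2 in *; split; [|lra]; apply Rmin_glb; lra|].
      intros t Ht. destruct (Rtotal_order t rs) as [h1|[h1|h1]].
      - apply Ha; lra.
      - subst; exact Hb.
      - apply Hg. unfold r2 in *. lra. }
    assert (rs < r2) by (unfold r2; apply Rmin_glb_lt; lra). lra. }
  intros t Ht. destruct (Req_dec t 1) as [h|h]; [subst; exact Hw1|]. apply Ha. lra.
Qed.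

End Main.

Lemma rs_opp (a : R -> R) (w : R -> R) : radial_solution (fun r y => a r * y) w ->
  radial_solution (fun r y => a r * y) (fun r => - w r).
Proof.
  intros [Hc [Hd [Hode [H0 H1]]]].
  assert (ED : forall t, Derive (fun x => - w x) t = - Derive w t) by (intros; apply Derive_opp).
  assert (EDD : forall t, Derive (Derive (fun x => - w x)) t = - Derive (Derive w) t).
  { intros t. rewrite (Derive_ext _ _ t ED). apply Derive_opp. }
  split; [|split; [|split; [|split]]].
  - apply (cont01_comp (fun x => - x) w Hc nopp_ex).
  - intros r Hr. destruct (Hd r Hr) as [h1 h2]. split.
    + apply (ex_derive_opp (K := R_AbsRing) (V := R_NormedModule)); auto.
    + apply ex_derive_ext with (fun t => - Derive w t); [intros; rewrite ED; reflexivity|].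
      apply (ex_derive_opp (K := R_AbsRing) (V := R_NormedModule)); auto.
  - intros r Hr. rewrite EDD, ED. specialize (Hode r Hr). simpl in *. lra.
  - unfold rderiv0_zero in *.
    apply filterlim_ext with (fun h => - ((w h - w 0) / h)); [intros; unfold Rdiv; ring|].
    apply filterlim_locally. intros eps. apply filterlim_locally with (eps := eps) in H0.
    generalize H0. apply filter_imp. intros x Hx. apply ballR. apply ballR in Hx.
    replace (- ((w x - w 0) / x) - 0) with (- ((w x - w 0) / x - 0)) by ring.
    rewrite Rabs_Ropp. exact Hx.
  - simpl. rewrite H1. ring.
Qed.

Theorem theorem3p2 (f u : R -> R) :
  C2_R f ->
  (forall x, 0 < x -> 0 < f x) ->
  (forall x, 0 < x -> 0 < Derive f x) ->
  (forall x, 0 < x -> Derive_n f 2 x * f x - (Derive f x) ^ 2 < 0) ->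
  (forall x, 0 < x -> x * Derive f x > f x) ->
  (* u is a positive solution of u'' + u'/r + f(u) = 0, u'(0) = u(1) = 0 *)
  radial_solution (fun _ y => f y) u ->
  (forall r, 0 <= r < 1 -> 0 < u r) ->
  (* non-degeneracy: the linearized problem has only the trivial solution *)
  forall w : R -> R,
    radial_solution (fun r y => Derive f (u r) * y) w ->
    forall r, 0 <= r <= 1 -> w r = 0.
Proof.
  intros [Hfd [Hf1d _]] Hfpos Hf1pos Hlc Hsup Hu Hupos w Hw.
  assert (Hlc' : forall x, 0 < x -> Derive (Derive f) x * f x - (Derive f x) ^ 2 < 0) by exact Hlc.
  destruct (Rtotal_order (w 0) 0) as [Hn|[Hz|Hp]].
  - exfalso. apply (main_pos f u (fun r => - w r)); auto.
    + apply rs_opp; auto.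
    + lra.
  - apply (prop0 f u w); auto.
  - exfalso. apply (main_pos f u w); auto.
Qed.
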